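(* Let $A$ be a finite alphabet. If the sliding block code $\phi: A^{\mathbb{N}} \to A^{\mathbb{N}}$ is a local homeomorphism that $*$-commutes with the shift map $\sigma$, then $\phi$ is surjective and there exists $k \in \mathbb{N}$ such that $\phi$ is $k$-to-$1$ (every point of $A^{\mathbb{N}}$ has exactly $k$ preimages under $\phi$).
   Context: $A$ is a finite set with the discrete topology; $\mathbb{N}=\{1,2,3,\dots\}$; $A^{\mathbb{N}}$ is the space of one-sided infinite sequences over $A$ with the product topology; $\sigma(x_1x_2x_3\cdots)=x_2x_3\cdots$. A sliding block code is a map $\tau_d: A^{\mathbb{N}}\to A^{\mathbb{N}}$, $\tau_d(x)_i=d(x_i\cdots x_{i+n-1})$, for some $n\in\mathbb{N}$ and function $d:A^n\to A$. A continuous map $f:X\to Y$ is a local homeomorphism if every $x\in X$ has an open neighborhood $U$ such that $f(U)$ is open in $Y$ and $f:U\to f(U)$ is a homeomorphism. Two functions $S,T: X\to X$ $*$-commute if $ST=TS$ and for every $(y,z)$ with $S(y)=T(z)$ there exists a unique $x$ with $T(x)=y$ and $S(x)=z$. *)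

(* Defs.v *)
From HB Require Import structures.
From mathcomp Require Import all_boot all_order all_algebra.
From mathcomp Require Import all_classical all_reals all_analysis.

Set Implicit Arguments.
Unset Strict Implicit.
Unset Printing Implicit Defensive.

Local Open Scope classical_set_scope.

(* The one-sided full shift A^N: sequences indexed by nat (index 0 plays the
   role of the paper's index 1), with the product topology of the discrete
   topology on the finite alphabet A. *)
Definition fullshift (A : finType) : Type :=
  {ptws nat -> discrete_topology A}.

Definition shift_map {A : finType} (x : fullshift A) : fullshift A :=
  fun i => x i.+1.

Definition sliding_block_map {A : finType} (n : nat) (d : n.-tuple A -> A)
  (x : fullshift A) : fullshift A :=
  fun i => d [tuple x (i + j) | j < n].

Definition is_sliding_block_code {A : finType} (phi : fullshift A -> fullshift A) :=
  exists n (d : n.-tuple A -> A), (0 < n)%N /\ phi = sliding_block_map d.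

(* local homeomorphism: f continuous, and every x has an open neighbourhood U
   with f(U) open and f : U -> f(U) a homeomorphism (a bijection U -> f(U),
   continuous since f is, whose inverse g is continuous on f(U)). *)
Definition local_homeomorphism {X Y : topologicalType} (f : X -> Y) :=
  continuous f /\
  forall x : X, exists U : set X,
    [/\ open U, U x, open (f @` U), set_inj U f &
        exists g : Y -> X,
          (forall y, (f @` U) y -> U (g y) /\ f (g y) = y) /\
          {within f @` U, continuous g}].

Definition star_commute {X : Type} (S T : X -> X) :=
  (forall x, S (T x) = T (S x)) /\
  (forall y z, S y = T z -> exists! x, T x = y /\ S x = z).

(* Main.v *)
Require Import Defs.
From HB Require Import structures.
From mathcomp Require Import all_boot all_order all_algebra.
From mathcomp Require Import all_classical all_reals all_analysis.
Local Open Scope classical_set_scope.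
Set Implicit Arguments.
Unset Strict Implicit.
Local Open Scope card_scope.

Definition agree {A : finType} (M : nat) (x y : fullshift A) :=
  forall i, (i < M)%N -> x i = y i.

Lemma nbhs_cyl (A : finType) (x : fullshift A) (U : set (fullshift A)) :
  nbhs x U -> exists M, forall y : fullshift A, agree M y x -> U y.
Proof.
move=> hU.
set C := filter_from [set: nat] (fun M => [set y : fullshift A | agree M y x]).
have FC : Filter C.
  apply: filter_from_filter; first by exists 0%N.
  move=> M1 M2 _ _; exists (maxn M1 M2) => // y Hy; split => i Hi; apply: Hy;
    rewrite leq_max Hi ?orbT //.
have cC : C --> x.
  apply/(pointwise_cvgP x) => t.
  apply/discrete_cvg.
  exists t.+1 => // y Hy; exact: Hy.
have := cC U hU.
by case=> M _ HM; exists M.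
Qed.

Lemma cyl_nbhs (A : finType) (x : fullshift A) M :
  nbhs x [set y : fullshift A | agree M y x].
Proof.
elim: M => [|M IH].
  have -> : [set y : fullshift A | agree 0 y x] = setT by apply/seteqP; split.
  exact: filterT.
have h1 : nbhs x [set y : fullshift A | y M = x M].
  have [+ _] := @pointwise_cvgP _ _ (nbhs x) x _.
  move=> /(_ (@cvg_id _ (nbhs x)) M) H; exact: (H _ (discrete_set1 (x M) : nbhs (x M : discrete_topology A) _)).
apply: filterS (filterI IH h1) => y [H1 H2] i; rewrite ltnS leq_eqVlt.
by case/orP => [/eqP -> //|]; apply: H1.
Qed.
Lemma cluster (T : finType) (X0 : nat -> nat -> T) :
  exists x : nat -> T, forall M m0, exists m,
    (m0 <= m)%N /\ forall i, (i < M)%N -> X0 m i = x i.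
Proof.
pose t0 := X0 0%N 0%N.
pose Good := fun w : seq T => forall m0, exists m, (m0 <= m)%N /\
  forall i, (i < size w)%N -> X0 m i = nth t0 w i.
have G0 : Good [::] by move=> m0; exists m0.
have step : forall w, exists a, Good w -> Good (rcons w a).
  move=> w; case: (pselect (Good w)) => Gw; last by exists t0.
  apply: contrapT => hn.
  have hb : forall a, exists b, forall m, (b <= m)%N ->
      ~ (forall i, (i < (size w).+1)%N -> X0 m i = nth t0 (rcons w a) i).
    move=> a; apply: contrapT => hb'; apply: hn; exists a => _ m0.
    apply: contrapT => hm; apply: hb'; exists m0 => m hm0 hag; apply: hm.
    by exists m; split => //; rewrite size_rcons.
  have [b hbP] := choice hb.
  have [m [hm hag]] := Gw (\max_(a : T) b a).
  apply: (hbP (X0 m (size w)) m).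
    by apply: leq_trans hm; exact: (@leq_bigmax T (fun a => b a) (X0 m (size w))).
  move=> i; rewrite ltnS leq_eqVlt nth_rcons; case/orP => [/eqP ->|hi].
    by rewrite ltnn eqxx.
  by rewrite hi; apply: hag.
have [f hf] := choice step.
pose pref k := iter k (fun w => rcons w (f w)) [::].
have prefS k : pref k.+1 = rcons (pref k) (f (pref k)) by [].
have Gp k : Good (pref k) by elim: k => [//|k IH]; rewrite prefS; apply: hf.
have Sp k : size (pref k) = k by elim: k => [//|k IH]; rewrite prefS size_rcons IH.
have Pp k i : (i < k)%N -> nth t0 (pref k) i = nth t0 (pref i.+1) i.
  elim: k => [//|k IH]; rewrite ltnS leq_eqVlt; case/orP => [/eqP -> //|hi].
  by rewrite prefS nth_rcons Sp hi IH.
exists (fun i => nth t0 (pref i.+1) i) => M m0.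
have [m [hm hag]] := Gp M m0.
exists m; split => // i hi; rewrite hag ?Sp // Pp //.
Qed.

Definition fib {A : finType} (phi : fullshift A -> fullshift A) (z : fullshift A) :=
  phi @^-1` [set z].

Lemma bijeq T U (X : set T) (Y : set U) (f : T -> U) :
  {in X &, injective f} -> f @` X = Y -> X #= Y.
Proof. by move=> fi <-; rewrite card_eq_sym; exact: inj_card_eq. Qed.

Lemma injle T U (X : set T) (Y : set U) (f : T -> U) :
  {in X &, injective f} -> f @` X `<=` Y -> X #<= Y.
Proof.
move=> fi sub; apply: (@card_le_trans _ _ _ (f @` X)).
  by have /card_eqPle[] := inj_card_eq fi.
exact: subset_card_le.
Qed.

Lemma sbm_local (A : finType) n (d : n.-tuple A -> A) (x y : fullshift A) i :
  agree (i + n) x y -> sliding_block_map d x i = sliding_block_map d y i.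
Proof.
move=> h; rewrite /sliding_block_map; congr d; apply: eq_from_tnth => j.
by rewrite !tnth_mktuple; apply: h; rewrite ltn_add2l.
Qed.

Lemma fib_shift (A : finType) (phi : fullshift A -> fullshift A)
  (Hc : star_commute phi shift_map) z : fib phi z #= fib phi (shift_map z).
Proof.
case: Hc => c u.
apply: (@bijeq _ _ _ _ shift_map).
  move=> x x' /set_mem hx /set_mem hx' e.
  have hx1 : phi (shift_map x) = shift_map z by rewrite c hx.
  have [w [_ uw]] := u (shift_map x) z hx1.
  rewrite -(uw x) ?(uw x') //; split => //.
apply/seteqP; split.
  by move=> _ [x hx <-]; rewrite /fib /= c hx.
move=> y hy; have [x [[e1 e2] _]] := u y z hy; by exists x.
Qed.

Lemma surj (A : finType) (phi : fullshift A -> fullshift A) n (d : n.-tuple A -> A)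
  (Hd : phi = sliding_block_map d) (Hc : star_commute phi shift_map) z :
  exists x, phi x = z.
Proof.
case: Hc => c u.
have approx : forall N (z0 : fullshift A), exists x : fullshift A,
    forall i, (i < N)%N -> phi x i = z0 i.
  elim=> [z0|N IH z0]; first by exists z0.
  have [y hy] := IH (shift_map z0).
  pose z' : fullshift A := fun i => if i is j.+1 then phi y j else z0 0%N.
  have e : phi y = shift_map z' by [].
  have [x [[_ hx] _]] := u y z' e.
  by exists x => -[|i] hi; rewrite hx //= hy.
have [X0 hX0] := choice (fun N => approx N z).
have [xs hxs] := @cluster A (X0 : nat -> nat -> A).
exists (xs : fullshift A); apply: funext => i.
have [m [hm hag]] := hxs (i + n)%N i.+1.
rewrite -(hX0 m i hm) Hd; apply: sbm_local => j hj.
by rewrite hag.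
Qed.

Lemma unif_inj (A : finType) (phi : fullshift A -> fullshift A)
  (Hl : local_homeomorphism phi) :
  exists m, forall x x' : fullshift A, phi x = phi x' -> agree m x x' -> x = x'.
Proof.
apply: contrapT => H.
have hb : forall m, exists p : fullshift A * fullshift A,
   [/\ phi p.1 = phi p.2, agree m p.1 p.2 & p.1 <> p.2].
  move=> m; apply: contrapT => hn; apply: H; exists m => x x' e a.
  by apply: contrapT => ne; apply: hn; exists (x, x'); split.
have [P hP] := choice hb.
have [xs hxs] := @cluster A (fun m => (P m).1 : nat -> A).
case: Hl => _ /(_ (xs : fullshift A)) [U [oU Uxs _ iU _]].
have [M hM] := @nbhs_cyl A _ _ (open_nbhs_nbhs (conj oU Uxs)).
have [m [hm hag]] := hxs M M.
have [e a ne] := hP m.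
apply: ne; apply: iU => //; apply: mem_set; apply: hM => i hi.
  exact: hag.
by rewrite -a ?hag //; apply: leq_trans hi hm.
Qed.

Lemma lsc (A : finType) (phi : fullshift A -> fullshift A)
  (Hl : local_homeomorphism phi) m (x : fullshift A) :
  exists p, forall z' : fullshift A, agree p z' (phi x) ->
    exists x', phi x' = z' /\ agree m x' x.
Proof.
case: Hl => _ /(_ x) [U [oU Ux oV iU [g [hg cg]]]].
have hV : (phi @` U) (phi x) by exists x.
have gz : g (phi x) = x.
  have [Ug e] := hg (phi x) hV.
  by apply: iU; rewrite ?inE //; apply: mem_set.
have cgz : {for (phi x), continuous g}.
  move: cg; rewrite continuous_open_subspace // => /(_ (phi x)); apply.
  exact: mem_set.
have nV : nbhs x (U `&` [set y | agree m y x]).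
  apply: filterI; [exact: open_nbhs_nbhs | exact: cyl_nbhs].
have n1 : nbhs (phi x) (g @^-1` (U `&` [set y | agree m y x])).
  by apply: cgz; rewrite gz.
have n2 : nbhs (phi x) (phi @` U) := open_nbhs_nbhs (conj oV hV).
have [p hp] := @nbhs_cyl A _ _ (filterI n1 n2).
exists p => z' /hp [[_ ag] hz'].
by exists (g z'); split; [exact: (hg z' hz').2 | exact: ag].
Qed.

Lemma fib_bound (A : finType) (phi : fullshift A -> fullshift A) m
  (Hm : forall x x' : fullshift A, phi x = phi x' -> agree m x x' -> x = x') :
  exists N, forall z, exists c, fib phi z #= `I_c /\ (c <= N)%N.
Proof.
have [N hN] : finite_set [set: m.-tuple A] := finite_finset.
exists N => z.
have le1 : fib phi z #<= `I_N.
  apply: (@card_le_trans _ _ _ [set: m.-tuple A]); last by have /card_eqPle[] := hN.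
  apply: (@injle _ _ _ _ (fun x : fullshift A => [tuple x i | i < m])) => //.
  move=> x x' /set_mem hx /set_mem hx' e; apply: Hm; first by rewrite hx hx'.
  move=> i hi; have := congr1 (fun t => tnth t (Ordinal hi)) e.
  by rewrite !tnth_mktuple.
have /finite_setP [c hc] : finite_set (fib phi z) by apply/finite_set_leP; exists N.
exists c; split => //.
rewrite -card_le_II; apply: card_le_trans le1.
by have /card_eqPle[] := card_esym hc.
Qed.

Lemma iter_shift (A : finType) p (w : fullshift A) i :
  iter p shift_map w i = w (i + p)%N.
Proof.
elim: p i => [|p IH] i; first by rewrite addn0.
by rewrite iterS /shift_map IH addSnnS.
Qed.

Lemma fib_iter (A : finType) (phi : fullshift A -> fullshift A)
  (Hc : star_commute phi shift_map) p w : fib phi w #= fib phi (iter p shift_map w).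
Proof.
elim: p => [|p IH]; first exact: card_eqxx.
rewrite iterS; apply: card_eq_trans IH _; exact: fib_shift.
Qed.

Theorem proposition5p8 (A : finType) (phi : fullshift A -> fullshift A) :
  is_sliding_block_code phi ->
  local_homeomorphism phi ->
  star_commute phi shift_map ->
  (forall y : fullshift A, exists x, phi x = y) /\
  exists k : nat, (0 < k)%N /\
    forall y : fullshift A, (phi @^-1` [set y]) #= `I_k.
Proof.
move=> [n [d [n0 Hd]]] Hl Hc.
have Hsurj := surj Hd Hc.
split => //.
have [m Hm] := unif_inj Hl.
have [N hN] := fib_bound Hm.
case: (pselect (exists z : fullshift A, True)) => [[z0 _]|nz]; last first.
  by exists 1%N; split => // y; exfalso; apply: nz; exists y.
pose P := fun c => `[< exists z, fib phi z #= `I_c >].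
have exP : exists c, P c.
  by have [c [hc _]] := hN z0; exists c; apply/asboolP; exists z0.
have ubP : forall c, P c -> (c <= N)%N.
  move=> c /asboolP [z hz]; have [c' [hc' le]] := hN z.
  suff -> : c = c' by [].
  by apply/card_eq_II; apply: card_eq_trans (card_esym hz) hc'.
case: (ex_maxnP exP ubP) => K /asboolP [z1 hz1] maxK.
have /card_set_bijP [f [ff fi fs]] := hz1.
have he : forall i, exists x, (i < K)%N -> fib phi z1 x /\ f x = i.
  move=> i; case: (pselect (i < K)%N) => hi; last by exists z0.
  by have [x hx <-] := fs i hi; exists x.
have [e he'] := choice he.
have hpp : forall x : fullshift A, exists p, forall z' : fullshift A,
    agree p z' (phi x) -> exists x', phi x' = z' /\ agree m x' x.
  by move=> x; exact: lsc.
have [pp hpp'] := choice hpp.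
pose p := (\max_(i < K) pp (e i))%N.
have key : forall y : fullshift A, fib phi y #= `I_K.
  move=> y.
  pose w : fullshift A := fun i => if (i < p)%N then z1 i else y (i - p)%N.
  have ew : iter p shift_map w = y.
    apply: funext => i; rewrite iter_shift /w ltnNge leq_addl /=.
    by rewrite addnK.
  rewrite -ew; apply: card_eq_trans (card_esym (fib_iter Hc p w)) _.
  have h2 : forall i, exists x', (i < K)%N -> phi x' = w /\ agree m x' (e i).
    move=> i; case: (pselect (i < K)%N) => hi; last by exists z0.
    have [fe _] := he' i hi.
    have : agree (pp (e i)) w (phi (e i)).
      move=> j hj; rewrite /w fe.
      have -> : (j < p)%N = true; last by [].
      apply: leq_trans hj _.
      exact: (@leq_bigmax _ (fun i0 : 'I_K => pp (e i0)) (Ordinal hi)).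
    by move=> /hpp' [x' [h1 h2]]; exists x'.
  have [e' he''] := choice h2.
  have [c [hc _]] := hN w.
  have cK : (c <= K)%N by apply: maxK; apply/asboolP; exists w.
  have Kc : (K <= c)%N.
    rewrite -card_le_II; apply: (@card_le_trans _ _ _ (fib phi w)); last first.
      by have /card_eqPle[] := hc.
    apply: (@injle _ _ _ _ e').
      move=> i j /set_mem hi /set_mem hj eij.
      have [fei _] := he' i hi; have [fej _] := he' j hj.
      have [_ ai] := he'' i hi; have [_ aj] := he'' j hj.
      have eij' : e i = e j.
        apply: Hm; first by rewrite fei fej.
        by move=> k hk; rewrite -ai // eij aj.
      by rewrite -(he' i hi).2 -(he' j hj).2 eij'.
    by move=> _ [i hi <-]; exact: (he'' i hi).1.
  have -> : K = c by apply/eqP; rewrite eqn_leq Kc cK.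
  exact: hc.
exists K; split; last exact: key.
rewrite lt0n; apply/negP => /eqP K0.
have [x hx] := Hsurj z1.
have : `I_1 #<= fib phi z1.
  apply: (@card_le_trans _ _ _ [set x]); first by have /card_eqPle[] := (@card_set1 _ x).
  by apply: subset_card_le => _ ->.
rewrite (card_le_eqr hz1) K0 card_le_II.
by [].
Qed.
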